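(* A quasi-orthomodular nearsemilattice $(A,\vee,\perp,0)$ is distributive if and only if it has the Riesz decomposition property.
   Context: A nearsemilattice is a poset $A$ with least element $0$ in which any two elements having a common upper bound have a join $x \vee y$ (a partial operation). It is distributive if whenever $y \vee z$ exists and $x \le y \vee z$, then $x = y' \vee z'$ for some $y' \le y$ and $z' \le z$. An orthogonality on $A$ is a binary relation $\perp$ with: $x \perp y$ implies $y \perp x$; $x \le y$ and $y \perp z$ imply $x \perp z$; $x \perp 0$ for all $x$. A quasi-orthomodular nearsemilattice is a nearsemilattice with an orthogonality such that: (a) if $x \perp y$ then $x \vee y$ exists; (b) if $x \le y$ then $y = x \vee z$ for some $z$ with $x \perp z$; (c) if $x \perp y$, $x \perp z$ and $y \le x \vee z$, then $y \le z$. Define the partial operation $x \oplus y := x \vee y$, defined exactly when $x \perp y$. The Riesz decomposition property: if $y \perp z$ and $x \le y \oplus z$, then $x = y' \oplus z'$ for some $y' \le y$ and $z' \le z$. *)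

(* Defs.v *)
Set Implicit Arguments.

Section Defs.
Variable A : Type.
Variable le : A -> A -> Prop.
Variable zero : A.
Variable orth : A -> A -> Prop.

Definition is_join (x y j : A) : Prop :=
  le x j /\ le y j /\ (forall u, le x u -> le y u -> le j u).

Definition nearsemilattice : Prop :=
  (forall x, le x x) /\
  (forall x y, le x y -> le y x -> x = y) /\
  (forall x y z, le x y -> le y z -> le x z) /\
  (forall x, le zero x) /\
  (forall x y u, le x u -> le y u -> exists j, is_join x y j).

Definition distributive : Prop :=
  forall x y z j, is_join y z j -> le x j ->
    exists y' z', le y' y /\ le z' z /\ is_join y' z' x.

Definition orthogonality : Prop :=
  (forall x y, orth x y -> orth y x) /\
  (forall x y z, le x y -> orth y z -> orth x z) /\
  (forall x, orth x zero).

Definition quasi_orthomodular_nearsemilattice : Prop :=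
  nearsemilattice /\ orthogonality /\
  (* (a) *) (forall x y, orth x y -> exists j, is_join x y j) /\
  (* (b) *) (forall x y, le x y -> exists z, orth x z /\ is_join x z y) /\
  (* (c) *) (forall x y z j, orth x y -> orth x z -> is_join x z j ->
              le y j -> le y z).

(* partial operation x (+) y := x \/ y, defined exactly when x _|_ y *)
Definition is_osum (x y s : A) : Prop := orth x y /\ is_join x y s.

Definition riesz_decomposition : Prop :=
  forall x y z s, is_osum y z s -> le x s ->
    exists y' z', le y' y /\ le z' z /\ is_osum y' z' x.
End Defs.

(* Main.v *)
Require Import Defs.

Theorem theorem4 (A : Type) (le : A -> A -> Prop) (zero : A)
  (orth : A -> A -> Prop) :
  quasi_orthomodular_nearsemilattice le zero orth ->
  (distributive le <-> riesz_decomposition le orth).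
Proof.
  intros [[Hrefl [Hanti [Htrans [H0 Hjn]]]] [[Hsym [Hdown Horth0]] [Ha [Hb Hc]]]].
  split.
  - intros D x y z s [Hyz Hj] Hxs.
    destruct (D x y z s Hj Hxs) as [y' [z' [Hy [Hz Hx]]]].
    exists y', z'. split; [exact Hy|]. split; [exact Hz|]. split; [|exact Hx].
    apply Hsym. apply (Hdown z' z y' Hz). apply Hsym.
    apply (Hdown y' y z Hy Hyz).
  - intros R x y z j Hj Hxj.
    destruct Hj as [Hyj [Hzj Hjl]].
    destruct (Hb y j Hyj) as [w [Hyw [Hy1 [Hw1 Hwl]]]].
    destruct (R z y w j (conj Hyw (conj Hy1 (conj Hw1 Hwl))) Hzj)
      as [y1 [w1 [Hy1y [Hw1w [_ [Hy1z [Hw1z Hzl]]]]]]].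
    assert (Hyw1 : orth y w1).
    { apply Hsym. apply (Hdown w1 w y Hw1w). apply Hsym. exact Hyw. }
    assert (Hjo : is_osum le orth y w1 j).
    { split; [exact Hyw1|]. split; [exact Hyj|]. split.
      - apply (Htrans _ z _); auto.
      - intros u Hu1 Hu2. apply Hjl; auto.
        apply Hzl; auto. apply (Htrans _ y _); auto. }
    destruct (R x y w1 j Hjo Hxj) as [y' [z' [Hy' [Hz' [_ Hx]]]]].
    exists y', z'. split; [exact Hy'|]. split; [|exact Hx].
    apply (Htrans _ w1 _); auto.
Qed.
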